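(* Let $P$ be the uniform distribution on $[0,1]$ and $\beta=\{\frac14,\frac12\}$. The conditional optimal set of six-points for $P$ with respect to $\beta$ is $\alpha_6=\{\frac1{12},\frac14,\frac38,\frac12,\frac7{10},\frac9{10}\}$, with $V_6=\frac{1777}{691200}$ ($\approx0.00257089$).
   Context: For a Borel probability measure $P$ on $\mathbb{R}$ and finite $\beta$ with $\mathrm{card}(\beta)=r$, for $n\ge r$, $V_n=\inf\{\int\min_{a\in\alpha\cup\beta}(x-a)^2dP(x):\mathrm{card}(\alpha)\le n-r\}$; a set $\alpha\cup\beta$ attaining the infimum, with each point of $\beta$ having a Voronoi region of positive $P$-measure, is a conditional optimal set of $n$-points with respect to $\beta$. *)

(* Defs.v *)
From Stdlib Require Import Reals List.
From Coquelicot Require Import Coquelicot.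
Import ListNotations.
Open Scope R_scope.

(* min_{a in S} (x - a)^2 for a nonempty finite set S given as a list
   (junk value 0 for the empty list, never used). *)
Fixpoint mind2 (x : R) (S : list R) : R :=
  match S with
  | [] => 0
  | [a] => (x - a) ^ 2
  | a :: s => Rmin ((x - a) ^ 2) (mind2 x s)
  end.

Definition distortion (S : list R) : R := RInt (fun x => mind2 x S) 0 1.

(* Finite sets alpha are lists; a list of length <= n - r represents exactly
   the sets of cardinality <= n - r. *)
Definition Vn (n : nat) (beta : list R) : Rbar :=
  Glb_Rbar (fun v => exists alpha : list R,
    (length alpha <= n - length beta)%nat /\ v = distortion (alpha ++ beta)).

Definition voronoi_prob (b : R) (S : list R) : R :=
  RInt (fun x => if Rle_dec ((x - b) ^ 2) (mind2 x S) then 1 else 0) 0 1.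

Definition same_set (S T : list R) : Prop := forall x, In x S <-> In x T.

Definition cond_optimal_set (n : nat) (beta S : list R) : Prop :=
  (exists alpha : list R,
      (length alpha <= n - length beta)%nat /\ same_set S (alpha ++ beta)) /\
  Finite (distortion S) = Vn n beta /\
  (forall b, In b beta -> voronoi_prob b S > 0).

(* Main.v *)
Require Import Defs.
From Stdlib Require Import Reals List Lra Lia Psatz Classical Wf_nat.
From Coquelicot Require Import Coquelicot.
Import ListNotations.
Open Scope R_scope.



Lemma Rmin_alt a b : Rmin a b = (a + b - Rabs (a - b)) / 2.
Proof. unfold Rmin, Rabs; destruct (Rle_dec a b); destruct (Rcase_abs (a-b)); lra. Qed.

Lemma cont_min (f g : R -> R) x : continuous f x -> continuous g x ->
  continuous (fun y => Rmin (f y) (g y)) x.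
Proof.
  intros Hf Hg.
  apply continuous_ext with (fun y => mult (plus (plus (f y) (g y)) (opp (Rabs (plus (f y) (opp (g y)))))) (/2)).
  { intros y. rewrite Rmin_alt. unfold mult, plus, opp; simpl. reflexivity. }
  apply (@continuous_mult R_UniformSpace R_AbsRing); [|apply continuous_const].
  apply (@continuous_plus R_UniformSpace R_AbsRing R_NormedModule); [apply (@continuous_plus R_UniformSpace R_AbsRing R_NormedModule); auto|].
  apply (@continuous_opp R_UniformSpace R_AbsRing R_NormedModule). apply continuous_Rabs_comp.
  apply (@continuous_plus R_UniformSpace R_AbsRing R_NormedModule); auto. apply (@continuous_opp R_UniformSpace R_AbsRing R_NormedModule); auto.
Qed.

Lemma cont_sq c x : continuous (fun y => (y - c)^2) x.
Proof.
  apply continuous_ext with (fun y => mult (plus y (opp c)) (plus y (opp c))).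
  { intros y. unfold mult, plus, opp; simpl. ring. }
  apply (@continuous_mult R_UniformSpace R_AbsRing); apply (@continuous_plus R_UniformSpace R_AbsRing R_NormedModule); try apply continuous_id; apply continuous_const.
Qed.

Lemma mind2_cont S x : continuous (fun y => mind2 y S) x.
Proof.
  induction S as [|a s IH].
  - simpl. apply continuous_const.
  - destruct s as [|b s].
    + simpl. apply cont_sq.
    + change (continuous (fun y => Rmin ((y - a)^2) (mind2 y (b :: s))) x).
      apply cont_min; [apply cont_sq | exact IH].
Qed.

Lemma mind2_ex S a b : ex_RInt (fun y => mind2 y S) a b.
Proof. apply (@ex_RInt_continuous R_CompleteNormedModule). intros; apply mind2_cont. Qed.

Lemma mind2_le x S a : In a S -> mind2 x S <= (x - a)^2.
Proof.
  induction S as [|c s IH]; simpl; [tauto|].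
  intros [->|H].
  - destruct s; [lra|]. apply Rmin_l.
  - destruct s as [|d s]; [destruct H|].
    eapply Rle_trans; [apply Rmin_r|]. apply IH; exact H.
Qed.

Lemma mind2_ge x S m : S <> [] -> (forall a, In a S -> m <= (x - a)^2) -> m <= mind2 x S.
Proof.
  induction S as [|c s IH]; intros Hne H; [congruence|].
  destruct s as [|d s].
  - simpl. apply H; simpl; auto.
  - change (m <= Rmin ((x - c)^2) (mind2 x (d :: s))).
    apply Rmin_glb. apply H; simpl; auto.
    apply IH. congruence. intros a Ha; apply H; simpl; auto.
Qed.

Lemma mind2_in x S : S <> [] -> exists a, In a S /\ mind2 x S = (x - a)^2.
Proof.
  induction S as [|c s IH]; intros Hne; [congruence|].
  destruct s as [|d s].
  - exists c; simpl; auto.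
  - change (exists a, In a (c :: d :: s) /\ Rmin ((x - c)^2) (mind2 x (d :: s)) = (x-a)^2).
    unfold Rmin; destruct (Rle_dec _ _).
    + exists c; simpl; auto.
    + destruct IH as [a [Ha Ha']]; [congruence|]. exists a; split; [simpl; auto|auto].
Qed.

Lemma mind2_dom x S T : S <> [] ->
  (forall a, In a S -> exists b, In b T /\ (x - b)^2 <= (x - a)^2) ->
  mind2 x T <= mind2 x S.
Proof.
  intros Hne H. destruct (mind2_in x S Hne) as [a [Ha ->]].
  destruct (H a Ha) as [b [Hb Hle]].
  eapply Rle_trans; [apply mind2_le; exact Hb| exact Hle].
Qed.

Lemma mind2_nonneg x S : 0 <= mind2 x S.
Proof.
  destruct S as [|a s]. simpl; lra.
  apply mind2_ge. congruence. intros; apply pow2_ge_0.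
Qed.

Lemma mind2_same x S T : S <> [] -> same_set S T -> mind2 x S = mind2 x T.
Proof.
  intros Hne H. assert (T <> []).
  { destruct S as [|a s]; [congruence|]. intros ->. apply (proj1 (H a)); simpl; auto. }
  apply Rle_antisym; apply mind2_dom; auto; intros a Ha; exists a; split; try lra; apply H; auto.
Qed.

Lemma int_sq c a b : RInt (fun x => (x - c)^2) a b = ((b - c)^3 - (a - c)^3)/3.
Proof.
  apply is_RInt_unique.
  replace (((b - c)^3 - (a - c)^3)/3) with (minus ((fun x => (x-c)^3/3) b) ((fun x => (x-c)^3/3) a))
    by (unfold minus, plus, opp; simpl; field).
  apply (@is_RInt_derive R_CompleteNormedModule (fun x => (x-c)^3/3)).
  - intros x _. auto_derive; auto. change ((1 * ((1 + 1 + 1) * ((x + - c) * ((x + - c) * 1))) * / 3)%R = ((x - c) ^ 2)%R). field.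
  - intros x _. apply cont_sq.
Qed.

Lemma ex_sq c a b : ex_RInt (fun x => (x - c)^2) a b.
Proof. apply (@ex_RInt_continuous R_CompleteNormedModule). intros; apply cont_sq. Qed.

Lemma piece S c u v : u <= v -> (forall x, u < x < v -> (x - c)^2 <= mind2 x S) ->
  ((v - c)^3 - (u - c)^3)/3 <= RInt (fun x => mind2 x S) u v.
Proof.
  intros Huv H. rewrite <- int_sq. apply RInt_le; auto using ex_sq, mind2_ex.
Qed.

Lemma chasles S a b c : RInt (fun x => mind2 x S) a c =
  RInt (fun x => mind2 x S) a b + RInt (fun x => mind2 x S) b c.
Proof. rewrite <- (RInt_Chasles _ a b c); auto using mind2_ex. Qed.

Lemma int_dom S T u v : u <= v -> S <> [] ->
  (forall x, u < x < v -> forall a, In a S -> exists b, In b T /\ (x - b)^2 <= (x - a)^2) ->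
  RInt (fun x => mind2 x T) u v <= RInt (fun x => mind2 x S) u v.
Proof.
  intros Huv Hne H. apply RInt_le; auto using mind2_ex.
  intros x Hx. apply mind2_dom; auto.
Qed.

Lemma int_nonneg S u v : u <= v -> 0 <= RInt (fun x => mind2 x S) u v.
Proof. intros. apply RInt_ge_0; auto using mind2_ex. intros; apply mind2_nonneg. Qed.



Definition ltb (x y : R) : bool := if Rlt_dec x y then true else false.
Lemma ltb_spec x y : ltb x y = true <-> x < y.
Proof. unfold ltb; destruct (Rlt_dec x y); split; intros; auto; try congruence; lra. Qed.
Lemma ltb_false x y : ltb x y = false <-> y <= x.
Proof. unfold ltb; destruct (Rlt_dec x y); split; intros; auto; try congruence; lra. Qed.

Lemma count3 (f g h : R -> bool) l :
  (forall x, f x = true -> g x = true -> False) ->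
  (forall x, f x = true -> h x = true -> False) ->
  (forall x, g x = true -> h x = true -> False) ->
  (length (filter f l) + length (filter g l) + length (filter h l) <= length l)%nat /\
  ((exists x, In x l /\ f x = false /\ g x = false /\ h x = false) ->
   (length (filter f l) + length (filter g l) + length (filter h l) < length l)%nat).
Proof.
  intros Hfg Hfh Hgh. induction l as [|a l IH]; simpl.
  - split; [lia|]. intros [x [[] _]].
  - destruct IH as [IH1 IH2].
    destruct (f a) eqn:Ef; destruct (g a) eqn:Eg; destruct (h a) eqn:Eh; simpl;
      try (exfalso; eauto; fail);
      (split; [lia|]); intros [x [[<-|Hx] [E1 [E2 E3]]]]; try congruence;
      try (assert (H := IH2 (ex_intro _ x (conj Hx (conj E1 (conj E2 E3))))); lia).
    lia.
Qed.

Lemma sqle x c p : (c <= x /\ (p <= c \/ x - c <= p - x)) \/ (x <= c /\ (c <= p \/ c - x <= x - p)) ->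
  (x - c)^2 <= (x - p)^2.
Proof. intros [[H1 [H2|H2]]|[H1 [H2|H2]]]; nra. Qed.

Lemma key0 x y p q : 0 <= x -> 0 <= y -> 0 < p -> 0 < q ->
  (x + y)^3 / (p + q)^2 <= x^3 / p^2 + y^3 / q^2.
Proof.
  intros Hx Hy Hp Hq.
  set (s := x / p). set (t := y / q).
  assert (Hs : 0 <= s) by (unfold s; apply Rdiv_le_0_compat; lra).
  assert (Ht : 0 <= t) by (unfold t; apply Rdiv_le_0_compat; lra).
  replace x with (p * s) by (unfold s; field; lra).
  replace y with (q * t) by (unfold t; field; lra).
  replace ((p * s)^3 / p^2) with (p * s^3) by (field; lra).
  replace ((q * t)^3 / q^2) with (q * t^3) by (field; lra).
  assert (E : p * s^3 + q * t^3 - (p * s + q * t)^3 / (p + q)^2 =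
     p * q * (s - t)^2 * ((2*p+q)*s + (p+2*q)*t) / (p+q)^2) by (field; lra).
  assert (0 <= p * q * (s - t)^2 * ((2*p+q)*s + (p+2*q)*t) / (p+q)^2).
  { apply Rdiv_le_0_compat; [|nra].
    apply Rmult_le_pos; [|nra]. apply Rmult_le_pos; [nra|]. apply pow2_ge_0. }
  lra.
Qed.

Lemma key x y p q c : 0 <= x -> 0 <= y -> 0 < p -> 0 < q -> 0 < c ->
  (x + y)^3 / (c * (p + q)^2) <= x^3 / (c * p^2) + y^3 / (c * q^2).
Proof.
  intros. assert (H' := key0 x y p q H H0 H1 H2).
  replace ((x + y)^3 / (c * (p + q)^2)) with (((x + y)^3 / (p + q)^2) / c) by (field; lra).
  replace (x^3 / (c * p^2) + y^3 / (c * q^2)) with ((x^3 / p^2 + y^3 / q^2) / c) by (field; lra).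
  apply Rmult_le_compat_r; [apply Rlt_le, Rinv_0_lt_compat; lra| exact H'].
Qed.

Lemma den_mono L c p q : 0 <= L -> 0 < c -> 0 < p <= q -> L^3 / (c * q^2) <= L^3 / (c * p^2).
Proof.
  intros HL Hc Hpq. unfold Rdiv. apply Rmult_le_compat_l; [apply pow_le; lra|].
  apply Rinv_le_contravar; [apply Rmult_lt_0_compat; [lra|apply pow_lt; lra]|]. apply Rmult_le_compat_l; [lra|apply pow_incr; lra].
Qed.

Lemma filter_len_pos (f : R -> bool) l : (length (filter f l) >= 0)%nat. Proof. lia. Qed.

Lemma M_bound n : forall A u v, (length A <= n)%nat -> u <= v ->
  (v - u)^3 / (12 * (INR n + 1)^2) <= RInt (fun x => mind2 x (u :: v :: A)) u v.
Proof.
  induction n as [n IH] using lt_wf_ind. intros A u v Hlen Huv.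
  assert (Hn : 0 <= INR n) by apply pos_INR.
  destruct (classic (exists a, In a A /\ u < a < v)) as [[a [Ha Hav]]|Hno].
  - set (A1 := filter (fun p => ltb p a) A).
    set (A2 := filter (fun p => ltb a p) A).
    destruct (count3 (fun p => ltb p a) (fun p => ltb a p) (fun _ => false) A) as [_ Hc].
    { intros x H1 H2. apply ltb_spec in H1; apply ltb_spec in H2; lra. }
    { intros; congruence. } { intros; congruence. }
    assert (Hlt : (length A1 + length A2 < length A)%nat).
    { assert (H := Hc (ex_intro _ a (conj Ha (conj (proj2 (ltb_false _ _) (Rle_refl _))
          (conj (proj2 (ltb_false _ _) (Rle_refl _)) eq_refl))))). simpl in H. fold A1 A2 in H. lia. }
    rewrite (chasles _ u a v).
    assert (I1 : RInt (fun x => mind2 x (u :: a :: A1)) u a <= RInt (fun x => mind2 x (u :: v :: A)) u a).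
    { apply int_dom; [lra|congruence|]. intros x Hx p Hp. simpl in Hp.
      destruct Hp as [<-|[<-|Hp]].
      - exists u; split; [simpl; auto|lra].
      - exists a; split; [simpl; auto|]. apply sqle; lra.
      - destruct (Rlt_dec p a).
        + exists p; split; [|lra]. right; right. apply filter_In; split; auto. apply ltb_spec; auto.
        + exists a; split; [simpl; auto|]. apply sqle; lra. }
    assert (I2 : RInt (fun x => mind2 x (a :: v :: A2)) a v <= RInt (fun x => mind2 x (u :: v :: A)) a v).
    { apply int_dom; [lra|congruence|]. intros x Hx p Hp. simpl in Hp.
      destruct Hp as [<-|[<-|Hp]].
      - exists a; split; [simpl; auto|]. apply sqle; lra.
      - exists v; split; [simpl; auto|lra].
      - destruct (Rlt_dec a p).
        + exists p; split; [|lra]. right; right. apply filter_In; split; auto. apply ltb_spec; auto.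
        + exists a; split; [simpl; auto|]. apply sqle; lra. }
    assert (B1 := IH (length A1) ltac:(lia) A1 u a (le_n _) ltac:(lra)).
    assert (B2 := IH (length A2) ltac:(lia) A2 a v (le_n _) ltac:(lra)).
    assert (K := key (a - u) (v - a) (INR (length A1) + 1) (INR (length A2) + 1) 12
      ltac:(lra) ltac:(lra) ltac:(pose proof (pos_INR (length A1)); lra)
      ltac:(pose proof (pos_INR (length A2)); lra) ltac:(lra)).
    assert (D : INR (length A1) + 1 + (INR (length A2) + 1) <= INR n + 1).
    { assert (HH : INR (S (length A1) + S (length A2)) <= INR (S n)) by (apply le_INR; lia).
      rewrite plus_INR, !S_INR in HH. lra. }
    pose proof (pos_INR (length A1)); pose proof (pos_INR (length A2)).
    assert (Dm : (v - u)^3 / (12 * (INR n + 1)^2) <= (v - u)^3 / (12 * (INR (length A1) + 1 + (INR (length A2) + 1))^2)).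
    { apply den_mono; lra. }
    replace (a - u + (v - a)) with (v - u) in K by ring.
    lra.
  - assert (Hout : forall p, In p A -> p <= u \/ v <= p).
    { intros p Hp. destruct (Rle_dec p u); [auto|]. destruct (Rle_dec v p); [auto|].
      exfalso; apply Hno; exists p; split; auto; lra. }
    set (m := (u + v) / 2).
    rewrite (chasles _ u m v).
    assert (P1 := piece (u :: v :: A) u u m ltac:(unfold m; lra)).
    assert (P2 := piece (u :: v :: A) v m v ltac:(unfold m; lra)).
    assert (Q1 : ((m - u)^3 - (u - u)^3)/3 <= RInt (fun x => mind2 x (u :: v :: A)) u m).
    { apply P1. intros x Hx. apply mind2_ge; [congruence|]. intros p Hp.
      simpl in Hp. unfold m in Hx. destruct Hp as [<-|[<-|Hp]]; [lra| apply sqle; lra|].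
      apply sqle; destruct (Hout p Hp); lra. }
    assert (Q2 : ((v - v)^3 - (m - v)^3)/3 <= RInt (fun x => mind2 x (u :: v :: A)) m v).
    { apply P2. intros x Hx. apply mind2_ge; [congruence|]. intros p Hp.
      simpl in Hp. unfold m in Hx. destruct Hp as [<-|[<-|Hp]]; [apply sqle; lra|lra|].
      apply sqle; destruct (Hout p Hp); lra. }
    assert (Dm := den_mono (v - u) 12 1 (INR n + 1) ltac:(lra) ltac:(lra) ltac:(lra)).
    replace (12 * 1^2) with 12 in Dm by ring.
    assert (E : ((m - u)^3 - (u - u)^3)/3 + ((v - v)^3 - (m - v)^3)/3 = (v - u)^3/12)
      by (unfold m; field).
    lra.
Qed.



Lemma E_bound n : forall A u v, (length A <= n)%nat -> u <= v ->
  (v - u)^3 / (12 * (INR n + /2)^2) <= RInt (fun x => mind2 x (v :: A)) u v.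
Proof.
  induction n as [n IH] using lt_wf_ind. intros A u v Hlen Huv.
  assert (Hn : 0 <= INR n) by apply pos_INR.
  destruct (classic (exists a, In a A /\ u < a < v)) as [[a [Ha Hav]]|Hno].
  - set (A1 := filter (fun p => ltb p a) A).
    set (A2 := filter (fun p => ltb a p) A).
    destruct (count3 (fun p => ltb p a) (fun p => ltb a p) (fun _ => false) A) as [_ Hc].
    { intros x H1 H2. apply ltb_spec in H1; apply ltb_spec in H2; lra. }
    { intros; congruence. } { intros; congruence. }
    assert (Hlt : (length A1 + length A2 < length A)%nat).
    { assert (H := Hc (ex_intro _ a (conj Ha (conj (proj2 (ltb_false _ _) (Rle_refl _))
          (conj (proj2 (ltb_false _ _) (Rle_refl _)) eq_refl))))). simpl in H. fold A1 A2 in H. lia. }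
    rewrite (chasles _ u a v).
    assert (I1 : RInt (fun x => mind2 x (a :: A1)) u a <= RInt (fun x => mind2 x (v :: A)) u a).
    { apply int_dom; [lra|congruence|]. intros x Hx p Hp. simpl in Hp.
      destruct Hp as [<-|Hp].
      - exists a; split; [simpl; auto|]. apply sqle; lra.
      - destruct (Rlt_dec p a).
        + exists p; split; [|lra]. right. apply filter_In; split; auto. apply ltb_spec; auto.
        + exists a; split; [simpl; auto|]. apply sqle; lra. }
    assert (I2 : RInt (fun x => mind2 x (a :: v :: A2)) a v <= RInt (fun x => mind2 x (v :: A)) a v).
    { apply int_dom; [lra|congruence|]. intros x Hx p Hp. simpl in Hp.
      destruct Hp as [<-|Hp].
      - exists v; split; [simpl; auto|lra].
      - destruct (Rlt_dec a p).
        + exists p; split; [|lra]. right; right. apply filter_In; split; auto. apply ltb_spec; auto.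
        + exists a; split; [simpl; auto|]. apply sqle; lra. }
    assert (B1 := IH (length A1) ltac:(lia) A1 u a (le_n _) ltac:(lra)).
    assert (B2 := M_bound (length A2) A2 a v (le_n _) ltac:(lra)).
    pose proof (pos_INR (length A1)); pose proof (pos_INR (length A2)).
    assert (K := key (a - u) (v - a) (INR (length A1) + /2) (INR (length A2) + 1) 12
      ltac:(lra) ltac:(lra) ltac:(lra) ltac:(lra) ltac:(lra)).
    assert (D : INR (length A1) + /2 + (INR (length A2) + 1) <= INR n + /2).
    { assert (HH : INR (S (length A1) + length A2) <= INR n) by (apply le_INR; lia).
      rewrite plus_INR, !S_INR in HH. lra. }
    assert (Dm : (v - u)^3 / (12 * (INR n + /2)^2) <= (v - u)^3 / (12 * (INR (length A1) + /2 + (INR (length A2) + 1))^2)).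
    { apply den_mono; lra. }
    replace (a - u + (v - a)) with (v - u) in K by ring.
    lra.
  - assert (Hout : forall p, In p A -> p <= u \/ v <= p).
    { intros p Hp. destruct (Rle_dec p u); [auto|]. destruct (Rle_dec v p); [auto|].
      exfalso; apply Hno; exists p; split; auto; lra. }
    destruct (classic (exists p, In p A /\ p <= u)) as [[p [Hp Hpu]]|Hnl].
    + assert (Hn1 : 1 <= INR n).
      { destruct A as [|b A]; [destruct Hp|]. simpl in Hlen. replace 1 with (INR 1) by reflexivity.
        apply le_INR; lia. }
      assert (I : RInt (fun x => mind2 x (u :: v :: [])) u v <= RInt (fun x => mind2 x (v :: A)) u v).
      { apply int_dom; [lra|congruence|]. intros x Hx q Hq. simpl in Hq.
        destruct Hq as [<-|Hq].
        - exists v; split; [simpl; auto|lra].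
        - destruct (Hout q Hq).
          + exists u; split; [simpl; auto|]. apply sqle; lra.
          + exists v; split; [simpl; auto|]. apply sqle; lra. }
      assert (B := M_bound 0 [] u v (le_n _) Huv). simpl INR in B.
      assert (Dm : (v - u)^3 / (12 * (INR n + /2)^2) <= (v - u)^3 / (12 * (0 + 1)^2)).
      { apply den_mono; lra. }
      lra.
    + assert (Hge : forall p, In p A -> v <= p).
      { intros p Hp. destruct (Hout p Hp); auto. exfalso; apply Hnl; exists p; auto. }
      assert (P := piece (v :: A) v u v Huv).
      assert (Q : ((v - v)^3 - (u - v)^3)/3 <= RInt (fun x => mind2 x (v :: A)) u v).
      { apply P. intros x Hx. apply mind2_ge; [congruence|]. intros p Hp.
        destruct Hp as [<-|Hp]; [lra|]. apply sqle. assert (H := Hge p Hp). lra. }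
      assert (Dm : (v - u)^3 / (12 * (INR n + /2)^2) <= (v - u)^3 / (12 * (/2)^2)).
      { apply den_mono; lra. }
      assert (E : ((v - v)^3 - (u - v)^3)/3 = (v - u)^3 / (12 * (/2)^2)) by field.
      lra.
Qed.

Lemma mind2_opp y S : mind2 (- y) S = mind2 y (map Ropp S).
Proof.
  induction S as [|a s IH]; [reflexivity|].
  destruct s as [|b s]; simpl; [ring|].
  simpl in IH. rewrite IH. f_equal. ring.
Qed.

Lemma refl_int S u v : RInt (fun x => mind2 x S) u v = RInt (fun y => mind2 y (map Ropp S)) (- v) (- u).
Proof.
  assert (H := RInt_comp (V := R_CompleteNormedModule) (fun x => mind2 x S) Ropp (fun _ => -1) (- u) (- v)).
  rewrite !Ropp_involutive in H.
  rewrite <- H; clear H.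
  2: { intros; apply mind2_cont. }
  2: { intros x _. split; [|apply continuous_const]. auto_derive; [auto| ring]. }
  transitivity (RInt (fun y => opp (mind2 y (map Ropp S))) (-u) (-v)).
  { apply RInt_ext. intros x _. rewrite mind2_opp. unfold scal; simpl; unfold mult, opp; simpl. lra. }
  rewrite (@RInt_opp R_CompleteNormedModule) by apply mind2_ex. apply (@opp_RInt_swap R_CompleteNormedModule). apply mind2_ex.
Qed.

Lemma E_left n A u v : (length A <= n)%nat -> u <= v ->
  (v - u)^3 / (12 * (INR n + /2)^2) <= RInt (fun x => mind2 x (u :: A)) u v.
Proof.
  intros Hl Huv. rewrite refl_int. simpl.
  replace (v - u) with (- u - - v) by ring.
  apply E_bound; [rewrite length_map; auto|lra].
Qed.



Lemma sq0 x : x^2 <= 0 -> x = 0.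
Proof. intros H. assert (H0 : x^2 = 0) by (pose proof (pow2_ge_0 x); lra). simpl in H0. rewrite Rmult_1_r in H0. apply Rmult_integral in H0. tauto. Qed.

Lemma T1 u v a : u < v -> RInt (fun x => mind2 x [v; a]) u v <= (v - u)^3 / 27 -> a = u + (v - u) / 3.
Proof.
  intros Huv H. assert (L3 : 0 < (v - u)^3) by (apply pow_lt; lra).
  destruct (Rle_dec a u).
  - assert (I : RInt (fun x => mind2 x [u; v]) u v <= RInt (fun x => mind2 x [v; a]) u v).
    { apply int_dom; [lra|congruence|]. intros x Hx p Hp. destruct Hp as [<-|[<-|[]]].
      - exists v; split; [simpl; auto|lra].
      - exists u; split; [simpl; auto|]. apply sqle; lra. }
    assert (B := M_bound 0 [] u v (le_n _) ltac:(lra)). simpl INR in B. lra.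
  - destruct (Rle_dec v a).
    + assert (I : RInt (fun x => mind2 x [v]) u v <= RInt (fun x => mind2 x [v; a]) u v).
      { apply int_dom; [lra|congruence|]. intros x Hx p Hp. destruct Hp as [<-|[<-|[]]].
        - exists v; split; [simpl; auto|lra].
        - exists v; split; [simpl; auto|]. apply sqle; lra. }
      assert (B := E_bound 0 [] u v (le_n _) ltac:(lra)). simpl INR in B.
      replace (12 * (0 + /2)^2) with 3 in B by field. lra.
    + rewrite (chasles _ u a v) in H.
      assert (P1 : ((a - a)^3 - (u - a)^3)/3 <= RInt (fun x => mind2 x [v; a]) u a).
      { apply piece; [lra|]. intros x Hx. apply mind2_ge; [congruence|]. intros p Hp.
        destruct Hp as [<-|[<-|[]]]; [apply sqle; lra|lra]. }
      assert (I : RInt (fun x => mind2 x [a; v]) a v <= RInt (fun x => mind2 x [v; a]) a v).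
      { apply int_dom; [lra|congruence|]. intros x Hx p Hp. exists p; split; [|lra].
        destruct Hp as [<-|[<-|[]]]; simpl; auto. }
      assert (B := M_bound 0 [] a v (le_n _) ltac:(lra)). simpl INR in B.
      set (t := a - u). set (L := v - u).
      assert (E : ((a - a)^3 - (u - a)^3)/3 + (v - a)^3 / (12 * (0 + 1)^2) - (v - u)^3/27
                  = (t - L/3)^2 * (t/4 + 5 * L / 12)) by (unfold t, L; field).
      assert (Hsq : (t - L/3)^2 * (t/4 + 5 * L / 12) <= 0) by lra.
      assert (Hpos : 0 < t/4 + 5 * L / 12) by (unfold t, L; lra).
      assert (Hz : (t - L/3)^2 <= 0).
      { apply (Rmult_le_reg_r (t/4 + 5 * L / 12)); auto. lra. }
      assert (Hz' := sq0 _ Hz).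
      unfold t, L in *. lra.
Qed.

Lemma T1L u v d : u < v -> RInt (fun x => mind2 x [u; d]) u v <= (v - u)^3 / 27 -> d = v - (v - u) / 3.
Proof.
  intros Huv H. rewrite refl_int in H. simpl map in H.
  replace (v - u) with (- u - - v) in H by ring.
  assert (T := T1 (- v) (- u) (- d) ltac:(lra) H). lra.
Qed.

Lemma T2 u v b : u < b < v -> RInt (fun x => mind2 x [u; v; b]) u v <= (v - u)^3 / 48 -> b = (u + v) / 2.
Proof.
  intros Hb H. rewrite (chasles _ u b v) in H.
  assert (I1 : RInt (fun x => mind2 x [u; b]) u b <= RInt (fun x => mind2 x [u; v; b]) u b).
  { apply int_dom; [lra|congruence|]. intros x Hx p Hp. destruct Hp as [<-|[<-|[<-|[]]]].
    - exists u; split; [simpl; auto|lra].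
    - exists b; split; [simpl; auto|]. apply sqle; lra.
    - exists b; split; [simpl; auto|lra]. }
  assert (I2 : RInt (fun x => mind2 x [b; v]) b v <= RInt (fun x => mind2 x [u; v; b]) b v).
  { apply int_dom; [lra|congruence|]. intros x Hx p Hp. destruct Hp as [<-|[<-|[<-|[]]]].
    - exists b; split; [simpl; auto|]. apply sqle; lra.
    - exists v; split; [simpl; auto|lra].
    - exists b; split; [simpl; auto|lra]. }
  assert (B1 := M_bound 0 [] u b (le_n _) ltac:(lra)). simpl INR in B1.
  assert (B2 := M_bound 0 [] b v (le_n _) ltac:(lra)). simpl INR in B2.
  assert (E : (b - u)^3 / (12 * (0 + 1)^2) + (v - b)^3 / (12 * (0 + 1)^2) - (v - u)^3 / 48
     = (v - u) / 4 * (b - (u + v) / 2)^2) by field.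
  assert (Hz : (v - u) / 4 * (b - (u + v) / 2)^2 <= 0) by lra.
  assert (Hz' : (b - (u + v) / 2)^2 <= 0).
  { apply (Rmult_le_reg_l ((v - u) / 4)); lra. }
  apply sq0 in Hz'. lra.
Qed.

Lemma T3' c d : 1/2 < c <= d -> RInt (fun x => mind2 x [1/2; c; d]) (1/2) 1 <= 1/600 ->
  c = 7/10 /\ d = 9/10.
Proof.
  intros Hcd H.
  destruct (Rle_dec 1 c).
  - assert (I : RInt (fun x => mind2 x [1/2; 1]) (1/2) 1 <= RInt (fun x => mind2 x [1/2; c; d]) (1/2) 1).
    { apply int_dom; [lra|congruence|]. intros x Hx p Hp. destruct Hp as [<-|[<-|[<-|[]]]].
      - exists (1/2); split; [simpl; auto|lra].
      - exists 1; split; [simpl; auto|]. apply sqle; lra.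
      - exists 1; split; [simpl; auto|]. apply sqle; lra. }
    assert (B := M_bound 0 [] (1/2) 1 (le_n _) ltac:(lra)). simpl INR in B. lra.
  - rewrite (chasles _ (1/2) c 1) in H.
    assert (I1 : RInt (fun x => mind2 x [1/2; c]) (1/2) c <= RInt (fun x => mind2 x [1/2; c; d]) (1/2) c).
    { apply int_dom; [lra|congruence|]. intros x Hx p Hp. destruct Hp as [<-|[<-|[<-|[]]]].
      - exists (1/2); split; [simpl; auto|lra].
      - exists c; split; [simpl; auto|lra].
      - exists c; split; [simpl; auto|]. apply sqle; lra. }
    assert (I2 : RInt (fun x => mind2 x [c; d]) c 1 <= RInt (fun x => mind2 x [1/2; c; d]) c 1).
    { apply int_dom; [lra|congruence|]. intros x Hx p Hp. destruct Hp as [<-|[<-|[<-|[]]]].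
      - exists c; split; [simpl; auto|]. apply sqle; lra.
      - exists c; split; [simpl; auto|lra].
      - exists d; split; [simpl; auto|lra]. }
    assert (B1 := M_bound 0 [] (1/2) c (le_n _) ltac:(lra)). simpl INR in B1.
    assert (B2 := E_left 1 [d] c 1 (le_n _) ltac:(lra)). simpl INR in B2.
    replace (12 * (1 + /2)^2) with 27 in B2 by field.
    set (s := c - 1/2).
    assert (E : (c - 1/2)^3 / (12 * (0 + 1)^2) + (1 - c)^3 / 27 - 1/600
       = (s - 1/5)^2 * (5 * s / 108 + 2/27)) by (unfold s; field).
    assert (Hpos : 0 < 5 * s / 108 + 2/27) by (unfold s; lra).
    assert (Hz : (s - 1/5)^2 <= 0).
    { apply (Rmult_le_reg_r (5 * s / 108 + 2/27)); auto. lra. }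
    assert (Hc : c = 7/10) by (apply sq0 in Hz; unfold s in Hz; lra).
    subst c. split; auto.
    assert (J : RInt (fun x => mind2 x [7/10; d]) (7/10) 1 <= (1 - 7/10)^3 / 27).
    { replace ((7/10 - 1/2)^3 / (12 * (0 + 1)^2)) with (1/1500) in B1 by field.
      replace ((1 - 7/10)^3 / 27) with (1/1000) by field. lra. }
    assert (T := T1L (7/10) 1 d ltac:(lra) J). lra.
Qed.

Lemma T3 c d : 1/2 < c -> 1/2 < d -> RInt (fun x => mind2 x [1/2; c; d]) (1/2) 1 <= 1/600 ->
  (c = 7/10 /\ d = 9/10) \/ (c = 9/10 /\ d = 7/10).
Proof.
  intros Hc Hd H. destruct (Rle_dec c d).
  - left. apply T3'; auto; lra.
  - right. assert (E : RInt (fun x => mind2 x [1/2; c; d]) (1/2) 1 = RInt (fun x => mind2 x [1/2; d; c]) (1/2) 1).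
    { apply RInt_ext. intros x _. apply mind2_same; [congruence|]. intros y; simpl; tauto. }
    rewrite E in H. destruct (T3' d c ltac:(lra) H). auto.
Qed.



Definition a6 := [1/12; 1/4; 3/8; 1/2; 7/10; 9/10].

Lemma sqle' x c p : 0 <= (p - c) * (p + c - 2 * x) -> (x - c)^2 <= (x - p)^2.
Proof. intros H. nra. Qed.
Lemma sqlt' x c p : 0 < (p - c) * (p + c - 2 * x) -> (x - c)^2 < (x - p)^2.
Proof. intros H. nra. Qed.

Lemma pt_eq S c x : In c S -> (forall p, In p S -> (x - c)^2 <= (x - p)^2) -> mind2 x S = (x - c)^2.
Proof.
  intros Hc H. apply Rle_antisym; [apply mind2_le; auto|apply mind2_ge; auto].
  destruct S; [destruct Hc|congruence].
Qed.

Lemma piece_eq S c lo hi : In c S -> lo <= hi ->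
  (forall x, lo <= x <= hi -> forall p, In p S -> (x - c)^2 <= (x - p)^2) ->
  RInt (fun x => mind2 x S) lo hi = ((hi - c)^3 - (lo - c)^3)/3.
Proof.
  intros Hc Hlh H. rewrite <- int_sq. apply RInt_ext. intros x Hx.
  rewrite Rmin_left, Rmax_right in Hx by lra. apply pt_eq; auto. apply H; lra.
Qed.

Ltac dom6 := let x := fresh "x" in let Hx := fresh "Hx" in let p := fresh "p" in let Hp := fresh "Hp" in
  intros x Hx p Hp; simpl in Hp;
  repeat (destruct Hp as [<-|Hp]; [apply sqle'; nra|]); destruct Hp.

Lemma dist_a6 : distortion a6 = 1777/691200.
Proof.
  unfold distortion.
  rewrite (chasles _ 0 (1/6) 1), (chasles _ (1/6) (5/16) 1), (chasles _ (5/16) (7/16) 1),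
    (chasles _ (7/16) (3/5) 1), (chasles _ (3/5) (4/5) 1).
  rewrite (piece_eq _ (1/12) 0 (1/6)) by (simpl; tauto || lra || dom6).
  rewrite (piece_eq _ (1/4) (1/6) (5/16)) by (simpl; tauto || lra || dom6).
  rewrite (piece_eq _ (3/8) (5/16) (7/16)) by (simpl; tauto || lra || dom6).
  rewrite (piece_eq _ (1/2) (7/16) (3/5)) by (simpl; tauto || lra || dom6).
  rewrite (piece_eq _ (7/10) (3/5) (4/5)) by (simpl; tauto || lra || dom6).
  rewrite (piece_eq _ (9/10) (4/5) 1) by (simpl; tauto || lra || dom6).
  field.
Qed.



Lemma vor_gen b S lo hi : 0 <= lo -> lo < hi -> hi <= 1 ->
  (forall x, 0 < x < lo -> mind2 x S < (x - b)^2) ->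
  (forall x, lo < x < hi -> (x - b)^2 <= mind2 x S) ->
  (forall x, hi < x < 1 -> mind2 x S < (x - b)^2) ->
  voronoi_prob b S > 0.
Proof.
  intros H0 Hlh H1 Ha Hb Hc. unfold voronoi_prob.
  set (f := fun x => if Rle_dec ((x - b)^2) (mind2 x S) then 1 else 0).
  assert (J1 : is_RInt f 0 lo (scal (lo - 0) 0)).
  { apply (@is_RInt_ext R_NormedModule (fun _ => 0)); [|apply (@is_RInt_const R_NormedModule)].
    intros x Hx. rewrite Rmin_left, Rmax_right in Hx by lra. unfold f.
    destruct (Rle_dec _ _) as [r|r]; auto. specialize (Ha x Hx). lra. }
  assert (J2 : is_RInt f lo hi (scal (hi - lo) 1)).
  { apply (@is_RInt_ext R_NormedModule (fun _ => 1)); [|apply (@is_RInt_const R_NormedModule)].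
    intros x Hx. rewrite Rmin_left, Rmax_right in Hx by lra. unfold f.
    destruct (Rle_dec _ _) as [r|r]; auto. specialize (Hb x Hx). lra. }
  assert (J3 : is_RInt f hi 1 (scal (1 - hi) 0)).
  { apply (@is_RInt_ext R_NormedModule (fun _ => 0)); [|apply (@is_RInt_const R_NormedModule)].
    intros x Hx. rewrite Rmin_left, Rmax_right in Hx by lra. unfold f.
    destruct (Rle_dec _ _) as [r|r]; auto. specialize (Hc x Hx). lra. }
  assert (J := is_RInt_Chasles _ _ _ _ _ _ (is_RInt_Chasles _ _ _ _ _ _ J1 J2) J3).
  change (RInt f 0 1 > 0). rewrite (is_RInt_unique _ _ _ _ J). unfold plus, scal; simpl. unfold mult; simpl. lra.
Qed.

Lemma vor1 : voronoi_prob (1/4) a6 > 0.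
Proof.
  apply (vor_gen _ _ (1/6) (5/16)); try lra.
  - intros x Hx. eapply Rle_lt_trans; [apply (mind2_le x a6 (1/12)); simpl; tauto|].
    apply sqlt'. nra.
  - intros x Hx. rewrite (pt_eq _ (1/4)); [lra|simpl; tauto|]. intros p Hp; simpl in Hp;
    repeat (destruct Hp as [<-|Hp]; [apply sqle'; nra|]); destruct Hp.
  - intros x Hx. eapply Rle_lt_trans; [apply (mind2_le x a6 (3/8)); simpl; tauto|].
    apply sqlt'. nra.
Qed.

Lemma vor2 : voronoi_prob (1/2) a6 > 0.
Proof.
  apply (vor_gen _ _ (7/16) (3/5)); try lra.
  - intros x Hx. eapply Rle_lt_trans; [apply (mind2_le x a6 (3/8)); simpl; tauto|].
    apply sqlt'. nra.
  - intros x Hx. rewrite (pt_eq _ (1/2)); [lra|simpl; tauto|]. intros p Hp; simpl in Hp;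
    repeat (destruct Hp as [<-|Hp]; [apply sqle'; nra|]); destruct Hp.
  - intros x Hx. eapply Rle_lt_trans; [apply (mind2_le x a6 (7/10)); simpl; tauto|].
    apply sqlt'. nra.
Qed.



Lemma lower alpha : (length alpha <= 4)%nat ->
  1777/691200 <= distortion (alpha ++ [1/4; 1/2]) /\
  (distortion (alpha ++ [1/4; 1/2]) <= 1777/691200 -> same_set (alpha ++ [1/4; 1/2]) a6).
Proof.
  intros Hlen. set (S := alpha ++ [1/4; 1/2]).
  assert (HS : S <> []) by (unfold S; destruct alpha; discriminate).
  assert (InS : forall p, In p S <-> In p alpha \/ p = 1/4 \/ p = 1/2).
  { intros p. unfold S. rewrite in_app_iff. simpl. intuition. }
  unfold distortion. rewrite (chasles _ 0 (1/4) 1), (chasles _ (1/4) (1/2) 1).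
  set (A1 := filter (fun p => ltb p (1/4)) alpha).
  set (A2 := filter (fun p => andb (ltb (1/4) p) (ltb p (1/2))) alpha).
  set (A3 := filter (fun p => ltb (1/2) p) alpha).
  destruct (count3 (fun p => ltb p (1/4)) (fun p => andb (ltb (1/4) p) (ltb p (1/2))) (fun p => ltb (1/2) p) alpha)
    as [Hc1 Hc2].
  { intros x H1 H2. apply andb_prop in H2. rewrite !ltb_spec in *. lra. }
  { intros x H1 H2. rewrite !ltb_spec in *. lra. }
  { intros x H1 H2. apply andb_prop in H1. rewrite !ltb_spec in *. lra. }
  fold A1 A2 A3 in Hc1, Hc2.
  assert (I1 : RInt (fun x => mind2 x (1/4 :: A1)) 0 (1/4) <= RInt (fun x => mind2 x S) 0 (1/4)).
  { apply int_dom; [lra|auto|]. intros x Hx p Hp. apply InS in Hp.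
    destruct Hp as [Hp|[ -> | -> ]].
    - destruct (Rlt_dec p (1/4)).
      + exists p; split; [|lra]. right. apply filter_In; split; auto. apply ltb_spec; auto.
      + exists (1/4); split; [simpl; auto|]. apply sqle; lra.
    - exists (1/4); split; [simpl; auto|lra].
    - exists (1/4); split; [simpl; auto|]. apply sqle; lra. }
  assert (I2 : RInt (fun x => mind2 x (1/4 :: 1/2 :: A2)) (1/4) (1/2) <= RInt (fun x => mind2 x S) (1/4) (1/2)).
  { apply int_dom; [lra|auto|]. intros x Hx p Hp. apply InS in Hp.
    destruct Hp as [Hp|[ -> | -> ]].
    - destruct (Rle_dec p (1/4)); [exists (1/4); split; [simpl; auto|]; apply sqle; lra|].
      destruct (Rle_dec (1/2) p); [exists (1/2); split; [simpl; auto|]; apply sqle; lra|].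
      exists p; split; [|lra]. right; right. apply filter_In; split; auto.
      apply andb_true_intro; rewrite !ltb_spec; lra.
    - exists (1/4); split; [simpl; auto|lra].
    - exists (1/2); split; [simpl; auto|lra]. }
  assert (I3 : RInt (fun x => mind2 x (1/2 :: A3)) (1/2) 1 <= RInt (fun x => mind2 x S) (1/2) 1).
  { apply int_dom; [lra|auto|]. intros x Hx p Hp. apply InS in Hp.
    destruct Hp as [Hp|[ -> | -> ]].
    - destruct (Rle_dec p (1/2)); [exists (1/2); split; [simpl; auto|]; apply sqle; lra|].
      exists p; split; [|lra]. right. apply filter_In; split; auto. apply ltb_spec; lra.
    - exists (1/2); split; [simpl; auto|]. apply sqle; lra.
    - exists (1/2); split; [simpl; auto|lra]. }
  assert (N1 := int_nonneg (1/4 :: A1) 0 (1/4) ltac:(lra)).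
  assert (N2 := int_nonneg (1/4 :: 1/2 :: A2) (1/4) (1/2) ltac:(lra)).
  assert (N3 := int_nonneg (1/2 :: A3) (1/2) 1 ltac:(lra)).
  set (R1 := RInt (fun x => mind2 x (1/4 :: A1)) 0 (1/4)) in *.
  set (R2 := RInt (fun x => mind2 x (1/4 :: 1/2 :: A2)) (1/4) (1/2)) in *.
  set (R3 := RInt (fun x => mind2 x (1/2 :: A3)) (1/2) 1) in *.
  set (J1 := RInt (fun x => mind2 x S) 0 (1/4)) in *.
  set (J2 := RInt (fun x => mind2 x S) (1/4) (1/2)) in *.
  set (J3 := RInt (fun x => mind2 x S) (1/2) 1) in *.
  assert (strict : 1777/691200 < R1 + R2 + R3 -> 1777/691200 <= J1 + (J2 + J3) /\
     (J1 + (J2 + J3) <= 1777/691200 -> same_set S a6)).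
  { intros Hlt. split; [lra|]. intros; exfalso; lra. }
  destruct (Nat.eq_dec (length A1) 0) as [E1|E1].
  { apply strict. assert (B := E_bound 0 A1 0 (1/4) ltac:(lia) ltac:(lra)). simpl INR in B. fold R1 in B.
    replace ((1/4 - 0)^3 / (12 * (0 + /2)^2)) with (1/192) in B by field. lra. }
  destruct (Compare_dec.le_lt_dec (length A3) 1) as [E3|E3].
  { apply strict. assert (B := E_left 1 A3 (1/2) 1 ltac:(lia) ltac:(lra)). simpl INR in B. fold R3 in B.
    replace ((1 - 1/2)^3 / (12 * (1 + /2)^2)) with (1/216) in B by field. lra. }
  destruct (Nat.eq_dec (length A2) 0) as [E2|E2].
  { apply strict. assert (B2 := M_bound 0 A2 (1/4) (1/2) ltac:(lia) ltac:(lra)). simpl INR in B2. fold R2 in B2.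
    replace ((1/2 - 1/4)^3 / (12 * (0 + 1)^2)) with (1/768) in B2 by field.
    destruct (Nat.eq_dec (length A3) 2) as [E3'|E3'].
    - assert (B1 := E_bound 2 A1 0 (1/4) ltac:(lia) ltac:(lra)). simpl INR in B1. fold R1 in B1.
      replace ((1/4 - 0)^3 / (12 * (1 + 1 + /2)^2)) with (1/4800) in B1 by field.
      assert (B3 := E_left 2 A3 (1/2) 1 ltac:(lia) ltac:(lra)). simpl INR in B3. fold R3 in B3.
      replace ((1 - 1/2)^3 / (12 * (1 + 1 + /2)^2)) with (1/600) in B3 by field.
      lra.
    - assert (B1 := E_bound 1 A1 0 (1/4) ltac:(lia) ltac:(lra)). simpl INR in B1. fold R1 in B1.
      replace ((1/4 - 0)^3 / (12 * (1 + /2)^2)) with (1/1728) in B1 by field.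
      assert (B3 := E_left 3 A3 (1/2) 1 ltac:(lia) ltac:(lra)). simpl INR in B3. fold R3 in B3.
      replace ((1 - 1/2)^3 / (12 * (1 + 1 + 1 + /2)^2)) with (1/1176) in B3 by field.
      lra. }
  assert (K1 : length A1 = 1%nat) by lia.
  assert (K2 : length A2 = 1%nat) by lia.
  assert (K3 : length A3 = 2%nat) by lia.
  assert (B1 := E_bound 1 A1 0 (1/4) ltac:(lia) ltac:(lra)). simpl INR in B1. fold R1 in B1.
  replace ((1/4 - 0)^3 / (12 * (1 + /2)^2)) with (1/1728) in B1 by field.
  assert (B2 := M_bound 1 A2 (1/4) (1/2) ltac:(lia) ltac:(lra)). simpl INR in B2. fold R2 in B2.
  replace ((1/2 - 1/4)^3 / (12 * (1 + 1)^2)) with (1/3072) in B2 by field.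
  assert (B3 := E_left 2 A3 (1/2) 1 ltac:(lia) ltac:(lra)). simpl INR in B3. fold R3 in B3.
  replace ((1 - 1/2)^3 / (12 * (1 + 1 + /2)^2)) with (1/600) in B3 by field.
  split; [lra|]. intros Hle.
  assert (Hall : forall p, In p alpha -> In p A1 \/ In p A2 \/ In p A3).
  { intros p Hp. destruct (ltb p (1/4)) eqn:Ea.
    { left. apply filter_In; auto. }
    destruct (andb (ltb (1/4) p) (ltb p (1/2))) eqn:Eb.
    { right; left. apply filter_In; auto. }
    destruct (ltb (1/2) p) eqn:Ec.
    { right; right. apply filter_In; auto. }
    exfalso. assert (H := Hc2 (ex_intro _ p (conj Hp (conj Ea (conj Eb Ec))))). lia. }
  destruct A1 as [|a [|? ?]] eqn:HA1; simpl in K1; try lia.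
  destruct A2 as [|b [|? ?]] eqn:HA2; simpl in K2; try lia.
  destruct A3 as [|c [|d [|? ?]]] eqn:HA3; simpl in K3; try lia.
  assert (Ha : In a alpha /\ a < 1/4).
  { assert (H : In a A1) by (rewrite HA1; simpl; auto). unfold A1 in H. apply filter_In in H.
    rewrite ltb_spec in H. auto. }
  assert (Hb : In b alpha /\ 1/4 < b < 1/2).
  { assert (H : In b A2) by (rewrite HA2; simpl; auto). unfold A2 in H. apply filter_In in H.
    destruct H as [H H']. apply andb_prop in H'. rewrite !ltb_spec in H'. split; [auto|lra]. }
  assert (Hcc : In c alpha /\ 1/2 < c).
  { assert (H : In c A3) by (rewrite HA3; simpl; auto). unfold A3 in H. apply filter_In in H.
    rewrite ltb_spec in H. auto. }
  assert (Hd : In d alpha /\ 1/2 < d).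
  { assert (H : In d A3) by (rewrite HA3; simpl; auto). unfold A3 in H. apply filter_In in H.
    rewrite ltb_spec in H. auto. }
  assert (Va : a = 1/12).
  { assert (T := T1 0 (1/4) a ltac:(lra) ltac:(unfold R1 in *; lra)). lra. }
  assert (Vb : b = 3/8).
  { assert (T := T2 (1/4) (1/2) b ltac:(lra) ltac:(unfold R2 in *; lra)). lra. }
  assert (Vcd : (c = 7/10 /\ d = 9/10) \/ (c = 9/10 /\ d = 7/10)).
  { apply T3; try lra. unfold R3 in *; lra. }
  intros x. rewrite InS. unfold a6. simpl. split.
  - intros [Hx|[ -> | -> ]]; [|tauto|tauto].
    destruct (Hall x Hx) as [H|[H|H]]; simpl in H; lra.
  - intros H. destruct Vcd as [[-> ->]|[-> ->]]; subst a b;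
    repeat (destruct H as [<-|H]; [tauto|]); destruct H.
Qed.



Lemma dist_same S T : S <> [] -> same_set S T -> distortion S = distortion T.
Proof. intros. unfold distortion. apply RInt_ext. intros. apply mind2_same; auto. Qed.

Lemma Vn_val : Vn 6 [1/4; 1/2] = Finite (1777/691200).
Proof.
  unfold Vn. apply is_glb_Rbar_unique. split.
  - intros v [alpha [Hl ->]]. simpl in Hl. simpl. apply (proj1 (lower alpha Hl)).
  - intros b Hb. apply Hb. exists [1/12; 3/8; 7/10; 9/10]. simpl. split; [lia|].
    rewrite <- dist_a6. apply dist_same; [discriminate|]. intros x; unfold a6; simpl; tauto.
Qed.

Theorem proposition3p5 :
  let beta := [1/4; 1/2] in
  let alpha6 := [1/12; 1/4; 3/8; 1/2; 7/10; 9/10] in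
  cond_optimal_set 6 beta alpha6 /\
  (forall S, cond_optimal_set 6 beta S -> same_set S alpha6) /\
  Vn 6 beta = Finite (1777/691200).
Proof.
  intros beta alpha6. unfold beta, alpha6.
  split; [|split; [|exact Vn_val]].
  - split; [|split].
    + exists [1/12; 3/8; 7/10; 9/10]. simpl. split; [lia|]. intros x; simpl; tauto.
    + rewrite Vn_val. f_equal. exact dist_a6.
    + intros b Hb. simpl in Hb. destruct Hb as [<-|[<-|[]]]; [apply vor1|apply vor2].
  - intros S [[alpha [Hl Hs]] [Hd _]]. simpl in Hl. rewrite Vn_val in Hd. injection Hd as Hd.
    assert (HS : S <> []).
    { intros ->. destruct (proj2 (Hs (1/4))) as []. apply in_app_iff; simpl; auto. }
    assert (E := dist_same S _ HS Hs). rewrite E in Hd.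
    destruct (lower alpha Hl) as [_ H]. assert (Hss := H ltac:(lra)).
    intros x. rewrite (Hs x). apply Hss.
Qed.
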